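(* For $j \geq 0$, define $s_{2j} = (gf)^j$ and $s_{2j+1} = f(gf)^j$. Let $m_i$ denote the $i$-th row in the matrix $M$. Then $m_i = s_i(m_0)$.
   Context: Let $X_2=\{0,1\}$. Define matrices $M_n$ of size $2^n \times n$ with entries in $X_2$ recursively by \[ M_1 = \begin{bmatrix} 0 \\ 1 \end{bmatrix}, \qquad M_{n+1} = \begin{bmatrix} M_n & 0_n \\ M_n^R & 1_n \end{bmatrix}, \] where $M_n^R$ is obtained from $M_n$ by reversing the order of its rows, and $0_n$, $1_n$ are column vectors with $2^n$ entries all equal to $0$, $1$ respectively (the rows of $M_n$ form the binary reflected Gray code of length $n$). Let $M=\lim_{n\to\infty}M_n$ be the infinite limit matrix, with rows indexed from $0$ and regarded as infinite binary words ending in $0^\infty$ (so $m_0=0^\infty$). The binary tree automorphisms $f$ and $g$ are defined recursively by $f(0w)=1w$, $f(1w)=0w$, and $g(0w)=0\,g(w)$, $g(1w)=1\,f(w)$ (and both fix the empty word). Composition is from right to left. *)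

(* Defs.v *)
From mathcomp Require Import all_boot.
Set Implicit Arguments. Unset Strict Implicit. Unset Printing Implicit Defensive.

(* Matrices M_n as the list of their 2^n rows (each row a list of n bits).
   Mmat 0 is the 1x0 matrix, so that Mmat 1 = [[0];[1]] = M_1 and
   Mmat n.+1 = [ M_n | 0_n ; M_n^R | 1_n ] as in the paper. *)
Fixpoint Mmat (n : nat) : seq (seq bool) :=
  match n with
  | 0 => [:: [::]]
  | n'.+1 => [seq rcons r false | r <- Mmat n'] ++ [seq rcons r true | r <- rev (Mmat n')]
  end.

Definition word := nat -> bool.

(* Entry (i,k) of the limit matrix M: read off M_n for any n with i < 2^n and
   k < n; n = i + k + 1 suffices (the M_n are nested). *)
Definition Mentry (i k : nat) : bool := nth false (nth [::] (Mmat (i + k + 1)) i) k.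

Definition mrow (i : nat) : word := fun k => Mentry i k.

Definition f (w : seq bool) : seq bool :=
  match w with [::] => [::] | b :: w' => ~~ b :: w' end.

Fixpoint g (w : seq bool) : seq bool :=
  match w with
  | [::] => [::]
  | false :: w' => false :: g w'
  | true :: w' => true :: f w'
  end.

(* Action of a (length- and prefix-preserving) tree automorphism on an
   infinite word: the k-th letter of F(w) is the k-th letter of F applied to
   the prefix of w of length k+1. *)
Definition act (F : seq bool -> seq bool) (w : word) : word :=
  fun k => nth false (F (mkseq w k.+1)) k.

Definition s (i : nat) : seq bool -> seq bool :=
  if odd i then f \o iter i./2 (g \o f) else iter i./2 (g \o f).

(* Main.v *)
Require Import Defs.
From mathcomp Require Import all_boot.
From mathcomp Require Import zify.

Definition bt (i k : nat) : bool := odd (iter k half i).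
Definition G (i k : nat) : bool := bt i k (+) bt i k.+1.
Definition gw (N i : nat) : seq bool := mkseq (G i) N.

Lemma oddbd (b : bool) y : odd (b + y.*2) = b.
Proof. by rewrite oddD odd_double addbF; case: b. Qed.

Lemma btS i k : bt i k.+1 = bt i./2 k.
Proof. by rewrite /bt iterSr. Qed.

Lemma GS i k : G i k.+1 = G i./2 k.
Proof. by rewrite /G !btS. Qed.

Lemma gwS N i : gw N.+1 i = G i 0 :: gw N i./2.
Proof.
apply: (@eq_from_nth _ false); first by rewrite /gw [in LHS]size_mkseq -[in RHS]cat1s size_cat size_mkseq.
rewrite /gw size_mkseq; move=> [|k] Hk; first by rewrite nth_mkseq.
rewrite (nth_mkseq _ _ Hk) -cat1s nth_cat /=.
by rewrite subn1 /= nth_mkseq // GS.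
Qed.

Lemma bt0 i : bt i 0 = odd i. Proof. by []. Qed.

Lemma f_even N i : ~~ odd i -> f (gw N i) = gw N i.+1.
Proof.
move=> He; case: N => [|N] //; rewrite !gwS /=.
have E : i = false + i./2.*2 by rewrite -{1}(odd_double_half i) (negbTE He).
have E1 : i.+1 = true + i./2.*2 by rewrite {1}E.
rewrite uphalf_half (negbTE He) add0n; congr (_ :: _).
rewrite /G /bt /= uphalf_half (negbTE He) /=. by case: (odd i./2).
Qed.

Lemma g_odd N i : odd i -> g (gw N i) = gw N i.+1.
Proof.
elim: N i => [|N IH] i Ho //; rewrite !gwS.
set q := i./2.
have E : i = true + q.*2 by rewrite -{1}(odd_double_half i) Ho.
have E1 : i.+1 = false + q.+1.*2 by rewrite {1}E /= doubleS.
have -> : G i 0 = ~~ odd q by rewrite /G btS !bt0 -/q E oddbd; case: (odd q).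
have -> : G i.+1 0 = odd q.+1 by rewrite /G btS !bt0 E1 half_bit_double oddbd.
rewrite E1 half_bit_double /=.
case Hq: (odd q) => /=.
  by rewrite (IH q Hq).
by rewrite f_even // Hq.
Qed.

Lemma sS i w : s i.+1 w = if odd i then g (s i w) else f (s i w).
Proof.
rewrite /s /= uphalf_half.
by case: (odd i).
Qed.

Lemma G0 k : G 0 k = false.
Proof. by rewrite /G /bt !iter_fix. Qed.

Lemma s_gw N i : s i (gw N 0) = gw N i.
Proof.
elim: i => [|i IH]; first by [].
rewrite sS IH; case Ho: (odd i).
  by rewrite g_odd.
by rewrite f_even ?Ho.
Qed.

Lemma iter_half_small n i : i < 2 ^ n -> iter n half i = 0.
Proof.
elim: n i => [|n IH] i Hi; first by case: i Hi.
rewrite iterSr IH // ltn_half_double -mul2n -expnS //.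
Qed.

Lemma dec x : x = odd x + x./2.*2.
Proof. by rewrite odd_double_half. Qed.

Lemma bt_hi n r k : r < 2 ^ n -> k < n -> bt (2 ^ n + r) k = bt r k.
Proof.
elim: n r k => [|n IH] r k Hr Hk //.
have E : 2 ^ n.+1 + r = odd r + (2 ^ n + r./2).*2.
  by have := dec r; rewrite expnS -!mul2n; lia.
case: k Hk => [|k] Hk.
  by rewrite !bt0 E oddbd.
rewrite !btS E half_bit_double IH //.
by rewrite ltn_half_double -mul2n -expnS.
Qed.

Lemma iter_hi n r : r < 2 ^ n -> iter n half (2 ^ n + r) = 1.
Proof.
elim: n r => [|n IH] r Hr; first by case: r Hr.
have E : 2 ^ n.+1 + r = odd r + (2 ^ n + r./2).*2.
  by have := dec r; rewrite expnS -!mul2n; lia.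
rewrite iterSr E half_bit_double IH //.
by rewrite ltn_half_double -mul2n -expnS.
Qed.

Lemma bt_lo n r k : r < 2 ^ n -> k < n -> bt (2 ^ n - r.+1) k = ~~ bt r k.
Proof.
elim: n r k => [|n IH] r k Hr Hk //.
have Hh : r./2 < 2 ^ n by rewrite ltn_half_double -mul2n -expnS.
have E : 2 ^ n.+1 - r.+1 = ~~ odd r + (2 ^ n - (r./2).+1).*2.
  have := dec r; move: Hr Hh; rewrite expnS -!mul2n; case: (odd r) => /= Hr Hh D; lia.
case: k Hk => [|k] Hk.
  by rewrite !bt0 E oddbd.
by rewrite !btS E half_bit_double IH.
Qed.

Lemma G_upper n r k : r < 2 ^ n -> k < n -> G (2 ^ n + r) k = G (2 ^ n - r.+1) k.
Proof.
move=> Hr Hk; rewrite /G bt_hi // bt_lo //.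
case: (ltnP k.+1 n) => Hk1.
  by rewrite bt_hi // bt_lo //; case: (bt r k); case: (bt r k.+1).
have -> : k.+1 = n by apply/eqP; rewrite eqn_leq Hk1 Hk.
rewrite /bt iter_hi // (@iter_half_small n (2 ^ n - r.+1)); last by have := expn_gt0 2 n; lia.
by case: (odd (iter k half r)).
Qed.

Lemma G_top n r : r < 2 ^ n -> G (2 ^ n + r) n = true.
Proof. by move=> Hr; rewrite /G /bt iterS iter_hi. Qed.

Lemma G_bot n i : i < 2 ^ n -> G i n = false.
Proof.
move=> Hi; rewrite /G /bt iterS iter_half_small //.
Qed.

Lemma size_Mmat n : size (Mmat n) = 2 ^ n.
Proof.
elim: n => [|n IH] //=.
by rewrite size_cat !size_map size_rev IH expnS mul2n addnn.
Qed.

Lemma gw_ext N i j : (forall k, k < N -> G i k = G j k) -> gw N i = gw N j.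
Proof.
move=> H; rewrite /gw /mkseq; apply/eq_in_map => k; rewrite mem_iota add0n => /andP [_]; exact: H.
Qed.

Lemma Mmat_gw n i : i < 2 ^ n -> nth [::] (Mmat n) i = gw n i.
Proof.
elim: n i => [|n IH] i Hi; first by case: i Hi.
rewrite /= nth_cat size_map size_Mmat /gw mkseqS -/(gw n i).
case: (ltnP i (2 ^ n)) => H.
  by rewrite (nth_map [::]) ?size_Mmat // IH // G_bot.
have Hr : i - 2 ^ n < 2 ^ n by move: Hi; rewrite expnS; lia.
have Ei : i = 2 ^ n + (i - 2 ^ n) by lia.
rewrite (nth_map [::]) ?size_rev ?size_Mmat // nth_rev ?size_Mmat // IH;
  last by rewrite ltn_subrL expn_gt0.
rewrite {2 3}Ei G_top //; congr rcons.
apply: gw_ext => k Hk; by rewrite -G_upper // -Ei.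
Qed.

Theorem mainTheorem10 (i : nat) : mrow i =1 act (s i) (mrow 0).
Proof.
move=> k.
have Hm : forall j k, mrow j k = G j k.
  move=> j l; rewrite /mrow /Mentry Mmat_gw; last first.
    apply: (leq_trans (ltn_expl j (isT : 1 < 2))); rewrite leq_exp2l //; lia.
  by rewrite /gw nth_mkseq //; lia.
rewrite /act Hm.
have -> : mkseq (mrow 0) k.+1 = gw k.+1 0 by apply: eq_mkseq => j; rewrite Hm.
by rewrite s_gw /gw nth_mkseq.
Qed.
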